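(* Let $\Sigma$ be a finite alphabet, $b\in\Sigma$, $\Gamma=\Sigma\setminus\{b\}$, $L\subseteq\Gamma^+$, and let $\psi$ be a $\mathsf{BE}$ formula over $\Gamma$ such that $L_{act}(\psi)=L$. Then there are $\mathsf{BE}$ formulas (over $\Sigma$) defining, under the action-based semantics, the languages $bL$, $\Sigma^*bL$, $\Sigma^*b(L+\varepsilon)$, $Lb$, $Lb\Sigma^*$, $(L+\varepsilon)b\Sigma^*$, and $bLb$.
   Context: $\Sigma^*$ ($\Sigma^+$) denotes the set of (non-empty) finite words over $\Sigma$, $\varepsilon$ the empty word, concatenation of languages is written by juxtaposition and $L+\varepsilon$ denotes $L\cup\{\varepsilon\}$. For $w=w(0)\cdots w(n)$, $\mathrm{Pref}(w)=\{w(0)\cdots w(i)\mid0\le i\le n-1\}$ and $\mathrm{Suff}(w)=\{w(i)\cdots w(n)\mid1\le i\le n\}$. $\mathsf{BE}$ formulas over an alphabet $\Delta$: $\psi::=a\mid\neg\psi\mid\psi\wedge\psi\mid\langle B\rangle\psi\mid\langle E\rangle\psi$ with $a\in\Delta$; each denotes a language $L_{act}(\psi)\subseteq\Delta^+$: $L_{act}(a)=a^+$, $L_{act}(\neg\psi)=\Delta^+\setminus L_{act}(\psi)$, $L_{act}(\psi_1\wedge\psi_2)=L_{act}(\psi_1)\cap L_{act}(\psi_2)$, $L_{act}(\langle B\rangle\psi)=\{w\in\Delta^+\mid\mathrm{Pref}(w)\cap L_{act}(\psi)\neq\emptyset\}$, $L_{act}(\langle E\rangle\psi)=\{w\in\Delta^+\mid\mathrm{Suff}(w)\cap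 L_{act}(\psi)\neq\emptyset\}$. A formula over $\Gamma\subseteq\Sigma$ is also regarded as a formula over $\Sigma$ when the alphabet is $\Sigma$; a formula $\varphi$ over $\Sigma$ defines a language $M$ if $L_{act}(\varphi)=M$ with $\Delta=\Sigma$. *)

(* Defs.v *)
From mathcomp Require Import all_boot.
Set Implicit Arguments. Unset Strict Implicit. Unset Printing Implicit Defensive.

Inductive BEform (T : Type) : Type :=
| BAtom of T
| BNeg of BEform T
| BAnd of BEform T & BEform T
| BB of BEform T
| BE of BEform T.

Fixpoint atoms_in (T : Type) (D : pred T) (f : BEform T) : Prop :=
  match f with
  | BAtom a => D a
  | BNeg p => atoms_in D p
  | BAnd p q => atoms_in D p /\ atoms_in D q
  | BB p => atoms_in D p
  | BE p => atoms_in D p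
  end.

Definition nonempty_over (T : eqType) (D : pred T) (w : seq T) : Prop :=
  w <> [::] /\ all D w.

(* Action-based semantics L_act with respect to the alphabet Delta = D.
   Pref(w) = proper non-empty prefixes take i w (0<i<|w|),
   Suff(w) = proper non-empty suffixes drop i w (0<i<|w|). *)
Fixpoint Lact (T : eqType) (D : pred T) (f : BEform T) (w : seq T) : Prop :=
  match f with
  | BAtom a => nonempty_over D w /\ all (pred1 a) w
  | BNeg p => nonempty_over D w /\ ~ Lact D p w
  | BAnd p q => Lact D p w /\ Lact D q w
  | BB p => nonempty_over D w /\
            exists i, 0 < i < size w /\ Lact D p (take i w)
  | BE p => nonempty_over D w /\
            exists i, 0 < i < size w /\ Lact D p (drop i w)
  end.

Definition defines (Sigma : finType) (phi : BEform Sigma) (M : seq Sigma -> Prop) :=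
  forall w, Lact predT phi w <-> M w.

(* Main.v *)
Require Import Defs.
From mathcomp Require Import all_boot zify.
From Stdlib Require Import Classical.

Section S.
Variable T : eqType.

Lemma all_take' (a : pred T) n s : all a s -> all a (take n s).
Proof. by rewrite -{1}(cat_take_drop n s) all_cat => /andP[]. Qed.
Lemma all_drop' (a : pred T) n s : all a s -> all a (drop n s).
Proof. by rewrite -{1}(cat_take_drop n s) all_cat => /andP[]. Qed.

Lemma take_ne (n : nat) (s : seq T) : 0 < n -> s <> [::] -> take n s <> [::].
Proof. by case: n => // n _; case: s. Qed.
Lemma drop_ne (n : nat) (s : seq T) : n < size s -> drop n s <> [::].
Proof. move=> h e; have := size_drop n s; rewrite e /=; lia. Qed.

Lemma Lact_ne D (f : BEform T) w : Lact D f w -> w <> [::].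
Proof. elim: f w => [a|p IH|p IHp q IHq|p IH|p IH] w /=; try by move=> [[]].
by move=> [] /IHp. Qed.

Lemma transfer (G : pred T) (f : BEform T) w : nonempty_over G w ->
  (Lact predT f w <-> Lact G f w).
Proof.
have Hp : forall w, w <> [::] -> nonempty_over predT w by move=> ? ?; split=> //; exact: all_predT.
elim: f w => [a|p IH|p IHp q IHq|p IH|p IH] w Hw /=.
- have [h1 h2] := Hw; split=> -[_ ?]; split=> //; by apply: Hp.
- have [h1 h2] := Hw; split=> -[_ H]; split => //; try by apply: Hp.
    by rewrite -IH.
  by rewrite IH.
- by rewrite IHp // IHq.
- have Ht : forall i, 0 < i < size w -> nonempty_over G (take i w).
    move=> i /andP[i0 i1]; case: Hw => h1 h2; split; [exact: take_ne|exact: all_take'].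
  have [h1 h2] := Hw.
  split=> -[_ [i [hi H]]]; (split; [by [] || by apply: Hp | exists i; split=> //]).
    by rewrite -IH //; exact: Ht.
  by rewrite IH //; exact: Ht.
- have Ht : forall i, 0 < i < size w -> nonempty_over G (drop i w).
    move=> i /andP[i0 i1]; case: Hw => h1 h2; split; [exact: drop_ne|exact: all_drop'].
  have [h1 h2] := Hw.
  split=> -[_ [i [hi H]]]; (split; [by [] || by apply: Hp | exists i; split=> //]).
    by rewrite -IH //; exact: Ht.
  by rewrite IH //; exact: Ht.
Qed.

Fixpoint mir (f : BEform T) : BEform T :=
  match f with
  | BAtom a => BAtom a
  | BNeg p => BNeg (mir p)
  | BAnd p q => BAnd (mir p) (mir q)
  | BB p => BE (mir p)
  | BE p => BB (mir p)
  end.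

Lemma ne_rev (w : seq T) : (rev w <> [::]) <-> (w <> [::]).
Proof. by case: w => //= x s; rewrite rev_cons; case: (rev s). Qed.

Lemma ne_over_rev D (w : seq T) : nonempty_over D (rev w) <-> nonempty_over D w.
Proof. by rewrite /nonempty_over ne_rev all_rev. Qed.

Lemma mir_ok D (f : BEform T) w : Lact D (mir f) w <-> Lact D f (rev w).
Proof.
elim: f w => [a|p IH|p IHp q IHq|p IH|p IH] w /=.
- by rewrite ne_over_rev all_rev.
- by rewrite ne_over_rev IH.
- by rewrite IHp IHq.
- rewrite ne_over_rev size_rev; split=> -[H [i [hi Hi]]]; split=> //.
    exists (size w - i); split; first lia.
    by move: Hi; rewrite IH rev_drop.
  exists (size w - i); split; first lia.
  by rewrite IH -take_rev.
- rewrite ne_over_rev size_rev; split=> -[H [i [hi Hi]]]; split=> //.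
    exists (size w - i); split; first lia.
    by move: Hi; rewrite IH rev_take.
  exists (size w - i); split; first lia.
  by rewrite IH -drop_rev.
Qed.
End S.
Section Sig.
Variable (Sigma : finType) (b : Sigma).
Notation F := (BEform Sigma).
Notation La := (Lact (T:=Sigma) predT).

Lemma LBB (p : F) w : La (BB p) w <-> nonempty_over predT w /\ exists i, 0 < i < size w /\ La p (take i w).
Proof. reflexivity. Qed.
Lemma LBE (p : F) w : La (BE p) w <-> nonempty_over predT w /\ exists i, 0 < i < size w /\ La p (drop i w).
Proof. reflexivity. Qed.
Lemma LNeg (p : F) w : La (BNeg p) w <-> nonempty_over predT w /\ ~ La p w.
Proof. reflexivity. Qed.
Lemma LAnd (p q : F) w : La (BAnd p q) w <-> La p w /\ La q w.
Proof. reflexivity. Qed.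
Lemma LAt a w : La (BAtom a) w <-> nonempty_over predT w /\ all (pred1 a) w.
Proof. reflexivity. Qed.
Ltac LL := repeat progress rewrite ?LBB ?LBE ?LNeg ?LAnd ?LAt.

Lemma nep (w : seq Sigma) : nonempty_over predT w <-> w <> [::].
Proof. split=> [[]//|h]; split=> //; exact: all_predT. Qed.

Definition Tt : F := locked (BNeg (BAnd (BAtom b) (BNeg (BAtom b)))).
Arguments Tt : simpl never.
Lemma Tt_ok w : La Tt w <-> w <> [::].
Proof. rewrite /Tt -lock; LL; rewrite nep; split=> [[]//|h]; split=> // -[A [_ nA]]; exact: (nA A). Qed.

Definition Or (p q : F) : F := locked (BNeg (BAnd (BNeg p) (BNeg q))).
Arguments Or : simpl never.
Lemma Or_ok p q w : La (Or p q) w <-> La p w \/ La q w.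
Proof.
rewrite /Or -lock; LL; rewrite !nep; split.
  move=> [h H]; case: (classic (La p w)) => [|np]; first by left.
  case: (classic (La q w)) => [|nq]; first by right.
  by case: H; split; split.
case=> H; (split; [exact: Lact_ne H|]) => -[[_ ?] [_ ?]]; contradiction.
Qed.

Definition Bl : F := locked (BAnd (BAtom b) (BNeg (BB Tt))).
Arguments Bl : simpl never.
Lemma Bl_ok w : La Bl w <-> w = [:: b].
Proof.
rewrite /Bl -lock; LL; rewrite !nep; split.
  move=> [[h1 h2] [_ H]]; case: w h1 h2 H => [//|x [|y s]] _ /=.
    by rewrite andbT => /eqP ->.
  move=> _ []; split=> //; exists 1; split=> //; exact/Tt_ok.
move=> ->; split; first by split=> //=; rewrite eqxx.
split=> // -[_ [i [/andP[h1 h2] _]]]; move: h1 h2 => /=; lia.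
Qed.

Definition G0 : F := locked (BB Bl).
Arguments G0 : simpl never.
Lemma G0_ok w : La G0 w <-> exists v, v <> [::] /\ w = b :: v.
Proof.
rewrite /G0 -lock; LL; rewrite nep; split.
  move=> [h [[|i] [/andP[h1 h2] HB]]] //.
  case: w h h2 HB => [//|x v] _ /= h2 /Bl_ok [-> ?]; exists v; split=> //.
  by move=> e; rewrite e /= in h2; lia.
move=> [v [h ->]]; split=> //; exists 1; split; last by apply: (proj2 (Bl_ok _)); rewrite /= take0.
by case: v h.
Qed.

Definition startsB : F := locked (Or Bl G0).
Arguments startsB : simpl never.
Lemma startsB_ok w : La startsB w <-> exists v, w = b :: v.
Proof.
rewrite /startsB -lock Or_ok Bl_ok G0_ok; split.
  by case=> [->|[v [_ ->]]]; eexists.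
by move=> [[|x v] ->]; [left|right; exists (x :: v)].
Qed.

Definition noB : F := locked (BAnd (BNeg startsB) (BNeg (BE startsB))).
Arguments noB : simpl never.
Lemma noB_ok w : La noB w <-> nonempty_over (fun x => x != b) w.
Proof.
rewrite /noB -lock; LL; rewrite !nep; split.
  move=> [[h H1] [_ H2]]; split=> //; apply/allP => x xw; apply/negP => /eqP ex.
  subst x.
  have hi : index b w < size w by rewrite index_mem.
  have hd := drop_nth b hi; rewrite nth_index // in hd.
  case e: (index b w) hd hi => [|i] hd hi.
    by apply: H1; apply/startsB_ok; rewrite drop0 in hd; exists (drop 1 w).
  apply: H2; split=> //; exists i.+1; split=> //; apply/startsB_ok; eexists; exact: hd.
move=> [h /allP H]; split; split=> //.
  by move=> /startsB_ok [v e]; have := H b; rewrite e inE eqxx => /(_ isT).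
move=> [_ [i [_ /startsB_ok [v e]]]]; have := H b.
have : b \in drop i w by rewrite e inE eqxx.
by move=> /mem_drop -> /(_ isT); rewrite eqxx.
Qed.

Fixpoint tau (f : F) : F :=
  match f with
  | BAtom a => BAnd G0 (BNeg (BE (BNeg (BAtom a))))
  | BNeg p => BAnd G0 (BNeg (tau p))
  | BAnd p q => BAnd (tau p) (tau q)
  | BB p => BAnd G0 (BB (tau p))
  | BE p => BAnd G0 (BE (BE p))
  end.

Lemma tau_ok f w : La (tau f) w <-> exists v, v <> [::] /\ w = b :: v /\ La f v.
Proof.
elim: f w => [a|p IH|p IHp q IHq|p IH|p IH] w /=.
- rewrite G0_ok !nep; split.
    move=> [[v [h ->]] [_ H]]; exists v; do 2 split=> //; split; first exact/nep.
    case E: (all (pred1 a) v) => //; exfalso; apply: H; split=> //.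
    exists 1; split; first by case: v h {E}.
    split; first by apply/nep; rewrite /= drop0.
    by move=> [_]; rewrite /= drop0 E.
  move=> [v [h [-> [_ H]]]]; split; first by exists v.
  split=> // -[_ [[|i] [/andP[_ hi] [_ H2]]]] //; apply: H2; split.
    by apply/nep; apply: drop_ne.
  by rewrite /= (@all_drop' _ _ i _ H).
- rewrite G0_ok IH nep; split.
    move=> [[v [h ->]] [_ H]]; exists v; do 2 split=> //; split; first exact/nep.
    by move=> hp; apply: H; exists v.
  move=> [v [h [-> [_ H]]]]; split; first by exists v.
  by split=> // -[v' [_ [[<-] ?]]].
- rewrite IHp IHq; split.
    by move=> [[v [h [-> ?]]] [v' [_ [[<-] ?]]]]; exists v.
  by move=> [v [h [-> [? ?]]]]; split; exists v.
- rewrite G0_ok nep; split.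
    move=> [[v [h ->]] [_ [i [hi /IH [v' [hv' [e Hv']]]]]]].
    exists v; do 2 split=> //; split; first exact/nep.
    case: i hi e => [//|i] /= hi [e]; exists i; split; last by rewrite e.
    case: i e hi => [|i] e hi; last by move: hi => /=; lia.
    by exfalso; apply: hv'; rewrite -e take0.
  move=> [v [h [-> [_ [i [hi Hi]]]]]]; split; first by exists v.
  split=> //; exists i.+1; split; first by rewrite /=; lia.
  apply/IH; exists (take i v); split=> //; apply: take_ne=> //; lia.
- rewrite G0_ok nep; split.
    move=> [[v [h ->]] [_ [i [hi [hn [k [hk Hk]]]]]]].
    exists v; do 2 split=> //; split; first exact/nep.
    rewrite drop_drop in Hk; rewrite size_drop /= in hk.
    case: i hi {hn} hk Hk => [//|i] /= hi hk Hk.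
    exists (k + i); split; [lia|].
    by move: Hk; rewrite addnS.
  move=> [v [h [-> [_ [i [hi Hi]]]]]]; split; first by exists v.
  split=> //; exists 1; split; first by case: v h {hi Hi}.
  rewrite /= drop0; split; first by apply/nep.
  by exists i.
Qed.

Lemma SufE_ok X w : La (Or X (BE X)) w <-> exists u s, La X s /\ w = u ++ s.
Proof.
rewrite Or_ok LBE nep; split.
  case=> [H|[h [i [hi H]]]]; first by exists [::], w.
  by exists (take i w), (drop i w); rewrite cat_take_drop.
move=> [[|x u] [s [H ->]]]; first by left.
have hs := @Lact_ne _ _ _ _ H.
right; split; first by [].
exists (size (x :: u)); split; last by rewrite drop_size_cat.
rewrite size_cat; case: s {H} hs => [//|y s] _ /=; lia.
Qed.

Lemma PreB_ok X w : La (Or X (BB X)) w <-> exists s u, La X s /\ w = s ++ u.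
Proof.
rewrite Or_ok LBB nep; split.
  case=> [H|[h [i [hi H]]]]; first by exists w, [::]; rewrite cats0.
  by exists (take i w), (drop i w); rewrite cat_take_drop.
move=> [s [[|x u] [H ->]]]; first by left; rewrite cats0.
have hs := @Lact_ne _ _ _ _ H.
right; split; first by case: s {H} hs.
exists (size s); split; last by rewrite take_size_cat.
rewrite size_cat; case: s {H} hs => [//|y s] _ /=; lia.
Qed.

Definition taup (f : F) : F := mir _ (tau (mir _ f)).
Lemma taup_ok f w : La (taup f) w <-> exists v, v <> [::] /\ w = v ++ [:: b] /\ La f v.
Proof.
rewrite /taup mir_ok tau_ok; split.
  move=> [v [h [e H]]]; exists (rev v); split; first by apply/ne_rev.
  split; last by move: H; rewrite mir_ok.
  by rewrite -(revK w) e rev_cons cats1.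
move=> [v [h [-> H]]]; exists (rev v); split; first by apply/ne_rev.
split; first by rewrite rev_cat.
by rewrite mir_ok revK.
Qed.
End Sig.


Theorem lemma4p3 (Sigma : finType) (b : Sigma) (L : seq Sigma -> Prop)
  (psi : BEform Sigma)
  (HL : forall w, L w -> nonempty_over (fun x => x != b) w)
  (Hpsi_over : atoms_in (fun x => x != b) psi)
  (Hpsi : forall w, Lact (fun x => x != b) psi w <-> L w) :
  (exists phi, defines phi (fun w => exists v, L v /\ w = b :: v)) /\
  (exists phi, defines phi (fun w => exists u v, L v /\ w = u ++ b :: v)) /\
  (exists phi, defines phi (fun w => exists u v, (L v \/ v = [::]) /\ w = u ++ b :: v)) /\
  (exists phi, defines phi (fun w => exists v, L v /\ w = v ++ [:: b])) /\
  (exists phi, defines phi (fun w => exists v u, L v /\ w = v ++ b :: u)) /\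
  (exists phi, defines phi (fun w => exists v u, (L v \/ v = [::]) /\ w = v ++ b :: u)) /\
  (exists phi, defines phi (fun w => exists v, L v /\ w = b :: v ++ [:: b])).
Proof.
pose Phi := BAnd psi (noB _ b).
have HPhi : forall v, Lact predT Phi v <-> L v.
  move=> v; rewrite LAnd noB_ok; split.
    by move=> [H1 H2]; apply/Hpsi; rewrite -transfer.
  move=> H; have H2 := HL _ H; split=> //; rewrite (transfer _ (fun x => x != b)) //; exact/Hpsi.
have Lne : forall v, L v -> v <> [::] by move=> v /HL [].
have T1 : forall w, Lact predT (tau _ b Phi) w <-> exists v, L v /\ w = b :: v.
  move=> w; rewrite tau_ok; split.
    by move=> [v [_ [-> /HPhi H]]]; exists v.
  by move=> [v [H ->]]; exists v; split; [exact: Lne | split=> //; exact/HPhi].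
have T4 : forall w, Lact predT (taup _ b Phi) w <-> exists v, L v /\ w = v ++ [:: b].
  move=> w; rewrite taup_ok; split.
    by move=> [v [_ [-> /HPhi H]]]; exists v.
  by move=> [v [H ->]]; exists v; split; [exact: Lne | split=> //; exact/HPhi].
split; first by exists (tau _ b Phi).
split.
  exists (Or _ (tau _ b Phi) (BE (tau _ b Phi))) => w; rewrite SufE_ok; split.
    by move=> [u [s [/T1 [v [H ->]] ->]]]; exists u, v.
  by move=> [u [v [H ->]]]; exists u, (b :: v); split=> //; apply/T1; exists v.
split.
  exists (Or _ (Or _ (tau _ b Phi) (Bl _ b)) (BE (Or _ (tau _ b Phi) (Bl _ b)))) => w; rewrite SufE_ok; split.
    move=> [u [s [/Or_ok [/T1 [v [H ->]]| /Bl_ok ->] ->]]]; first by exists u, v; split=> //; left.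
    by exists u, [::]; split=> //; right.
  move=> [u [v [Hv ->]]]; exists u, (b :: v); split=> //; apply/Or_ok.
  by case: Hv => [H|->]; [left; apply/T1; exists v | right; apply/Bl_ok].
split; first by exists (taup _ b Phi).
split.
  exists (Or _ (taup _ b Phi) (BB (taup _ b Phi))) => w; rewrite PreB_ok; split.
    by move=> [s [u [/T4 [v [H ->]] ->]]]; exists v, u; rewrite -catA.
  by move=> [v [u [H ->]]]; exists (v ++ [:: b]), u; rewrite -catA; split=> //; apply/T4; exists v.
split.
  exists (Or _ (Or _ (taup _ b Phi) (Bl _ b)) (BB (Or _ (taup _ b Phi) (Bl _ b)))) => w; rewrite PreB_ok; split.
    move=> [s [u [/Or_ok [/T4 [v [H ->]]| /Bl_ok ->] ->]]].
      by exists v, u; rewrite -catA; split=> //; left.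
    by exists [::], u; split=> //; right.
  move=> [v [u [Hv ->]]]; exists (v ++ [:: b]), u; rewrite -catA; split=> //; apply/Or_ok.
  by case: Hv => [H|->]; [left; apply/T4; exists v | right; apply/Bl_ok].
exists (tau _ b (taup _ b Phi)) => w; rewrite tau_ok; split.
  by move=> [v' [_ [-> /T4 [v [H ->]]]]]; exists v.
move=> [v [H ->]]; exists (v ++ [:: b]); split; first by case: v H.
by split=> //; apply/T4; exists v.
Qed.
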